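(* Let $a>0$, $\tau>0$ with $\tau\le a$. Then $\Sigma:=\{\lambda\in\mathbb{C}:\ a\lambda+e^{-\lambda\tau}=0\}\subset\{\lambda\in\mathbb{C}:\ \Re\lambda<0\}$. *)

(* Defs.v *)
From Stdlib Require Import Reals.
From Coquelicot Require Import Coquelicot.
Open Scope R_scope.

Definition Cexp (z : C) : C :=
  (exp (Re z) * cos (Im z), exp (Re z) * sin (Im z)).

Definition Sigma (a tau : R) : C -> Prop :=
  fun l => Cplus (Cmult (RtoC a) l) (Cexp (Copp (Cmult l (RtoC tau)))) = RtoC 0.

(* Main.v *)
Require Import Defs.
From Stdlib Require Import Reals Lra Psatz.
From Coquelicot Require Import Coquelicot.
Open Scope R_scope.

Theorem lemma3p4 (a tau : R) (ha : 0 < a) (htau : 0 < tau) (hle : tau <= a) :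
  forall l : C, Sigma a tau l -> Re l < 0.
Proof.
  intros [x y] H. unfold Sigma, Cexp in H. simpl in *.
  pose proof (f_equal fst H) as H1. pose proof (f_equal snd H) as H2.
  simpl in H1, H2. clear H.
  set (u := - (x * tau - y * 0)) in *.
  set (v := - (x * 0 + y * tau)) in *.
  assert (Hu : u = - (x * tau)) by (unfold u; ring).
  assert (Hv : v = - (y * tau)) by (unfold v; ring).
  rewrite Hv in H2, H1. rewrite sin_neg in H2. rewrite cos_neg in H1.
  pose proof (exp_pos u) as Ep.
  destruct (Rlt_or_le x 0) as [Hx|Hx]; [exact Hx| exfalso].
  assert (E1 : exp u <= 1).
  { rewrite <- exp_0. destruct (Req_dec u 0) as [e|e]; [rewrite e; lra|].
    left. apply exp_increasing. rewrite Hu. nra. }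
  destruct (Rtotal_order y 0) as [Hy|[Hy|Hy]].
  - assert (Hs : y * tau < sin (y * tau)) by (apply sin_gt_x; nra).
    destruct (Rle_or_lt 0 (sin (y*tau))) as [S|S]; nra.
  - subst y. assert (C0 : cos (0 * tau) = 1) by (rewrite Rmult_0_l; apply cos_0). rewrite C0 in H1. nra.
  - assert (Hs : sin (y * tau) < y * tau) by (apply sin_lt_x; nra).
    destruct (Rle_or_lt (sin (y*tau)) 0) as [S|S]; nra.
Qed.
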